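(* Let $(X,\leq)$ be a bi-directed partially ordered set, let $d$ be a complete metric on $X$, and let $A:X^{2}\to X$ be a mixed monotone operator such that, for some $\varphi\in\Phi$, $$d\big(A(x,y),A(u,v)\big)\leq\varphi\big(\max\{d(x,u),d(y,v)\}\big)\quad\text{for all }x,y,u,v\in X\text{ with }x\leq u,\ y\geq v.$$ Assume that either (b1) $A$ is continuous (with respect to the product topology on $X^2$ induced by $d$), or (b2) every nondecreasing convergent sequence in $X$ is bounded from above by its limit, and every nonincreasing convergent sequence in $X$ is bounded from below by its limit. If there exist $x_{0},y_{0}\in X$ such that $x_{0}\leq A(x_{0},y_{0})$ and $y_{0}\geq A(y_{0},x_{0})$, then there exists $x^{\ast}\in X$ such that $(x^{\ast},x^{\ast})$ is the unique coupled fixed point of $A$ (in particular, $x^{\ast}$ is the unique fixed point of $A$), and $A^{n}(x,y)\to x^{\ast}$ as $n\to\infty$ for all $x,y\in X$.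
   Context: A quasi-ordered set $(X,\leq)$ is bi-directed if every two-element subset of $X$ has both a lower bound and an upper bound. An operator $A:X^2\to X$ is mixed monotone if it is nondecreasing in its first argument and nonincreasing in its second argument. A pair $(x,y)\in X^2$ is a coupled fixed point of $A$ if $A(x,y)=x$ and $A(y,x)=y$; $x$ is a fixed point of $A$ if $A(x,x)=x$. $\Phi$ denotes the set of nondecreasing functions $\varphi:[0,\infty)\to[0,\infty)$ such that $\varphi^{n}(t)\to0$ as $n\to\infty$ for every $t\geq0$, where $\varphi^n$ is the $n$-th iterate of $\varphi$. For bivariate operators $A:X^2\to Y$, $B:Y^2\to Z$, the symmetric composition is $(B\ast A)(x,y)=B(A(x,y),A(y,x))$. The iterates of $A:X^2\to X$ are defined by $A^{0}=P_X$, where $P_X(x,y)=x$, and $A^{n+1}=A\ast A^{n}$ for $n\geq0$. *)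

(* Defs.v *)
From Stdlib Require Import Reals.
Open Scope R_scope.

Definition is_metric {X : Type} (d : X -> X -> R) : Prop :=
  (forall x y, 0 <= d x y) /\
  (forall x y, d x y = 0 <-> x = y) /\
  (forall x y, d x y = d y x) /\
  (forall x y z, d x z <= d x y + d y z).

Definition seq_cv {X : Type} (d : X -> X -> R) (u : nat -> X) (l : X) : Prop :=
  forall eps, 0 < eps -> exists N : nat, forall n, (N <= n)%nat -> d (u n) l < eps.

Definition cauchy_seq {X : Type} (d : X -> X -> R) (u : nat -> X) : Prop :=
  forall eps, 0 < eps -> exists N : nat, forall m n, (N <= m)%nat -> (N <= n)%nat ->
    d (u m) (u n) < eps.

Definition complete_metric {X : Type} (d : X -> X -> R) : Prop :=
  is_metric d /\ forall u, cauchy_seq d u -> exists l, seq_cv d u l.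

Definition partial_order {X : Type} (le : X -> X -> Prop) : Prop :=
  (forall x, le x x) /\
  (forall x y, le x y -> le y x -> x = y) /\
  (forall x y z, le x y -> le y z -> le x z).

Definition bi_directed {X : Type} (le : X -> X -> Prop) : Prop :=
  forall x y, (exists z, le z x /\ le z y) /\ (exists w, le x w /\ le y w).

Definition mixed_monotone {X : Type} (le : X -> X -> Prop) (A : X -> X -> X) : Prop :=
  (forall x x' y, le x x' -> le (A x y) (A x' y)) /\
  (forall x y y', le y y' -> le (A x y') (A x y)).

(* phi in Phi: phi maps [0,oo) to [0,oo), nondecreasing there, and
   phi^n(t) -> 0 for all t >= 0 (only values on [0,oo) matter) *)
Definition in_Phi (phi : R -> R) : Prop :=
  (forall t, 0 <= t -> 0 <= phi t) /\
  (forall s t, 0 <= s -> s <= t -> phi s <= phi t) /\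
  (forall t, 0 <= t -> Un_cv (fun n => Nat.iter n phi t) 0).

(* continuity of A : X^2 -> X for the product topology (induced by the max metric) *)
Definition continuous2 {X : Type} (d : X -> X -> R) (A : X -> X -> X) : Prop :=
  forall x y eps, 0 < eps -> exists delta, 0 < delta /\
    forall u v, d x u < delta -> d y v < delta -> d (A x y) (A u v) < eps.

Fixpoint iterA {X : Type} (A : X -> X -> X) (n : nat) (x y : X) : X :=
  match n with
  | O => x
  | S m => A (iterA A m x y) (iterA A m y x)
  end.

(* Main.v *)
Require Import Defs.
From Stdlib Require Import Reals Lra Lia.
Open Scope R_scope.

Lemma iter_nonneg (phi : R -> R) : in_Phi phi -> forall n t, 0 <= t -> 0 <= Nat.iter n phi t.
Proof. intros Hp n; induction n; intros t Ht; simpl; auto. apply (proj1 Hp); auto. Qed.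

Lemma phi_lt (phi : R -> R) : in_Phi phi -> forall t, 0 < t -> phi t < t.
Proof.
  intros Hp t Ht. destruct (Rlt_or_le (phi t) t) as [H|H]; auto. exfalso.
  assert (Hn : forall n, t <= Nat.iter n phi t).
  { induction n; simpl. lra. apply Rle_trans with (phi t); auto.
    apply (proj1 (proj2 Hp)); lra. }
  destruct (proj2 (proj2 Hp) t (Rlt_le _ _ Ht) t Ht) as [N HN].
  specialize (HN N (le_n N)). specialize (Hn N). unfold R_dist in HN.
  rewrite Rminus_0_r in HN. rewrite Rabs_right in HN by lra. lra.
Qed.

Lemma phi_le (phi : R -> R) : in_Phi phi -> forall t, 0 <= t -> phi t <= t.
Proof.
  intros Hp t Ht. destruct (Rle_lt_or_eq_dec 0 t Ht) as [H|H].
  - left; apply phi_lt; auto.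
  - subst t. destruct (Rle_lt_or_eq_dec 0 (phi 0) (proj1 Hp 0 (Rle_refl 0))) as [H1|H1]; [|lra].
    exfalso. assert (phi 0 <= phi (phi 0)) by (apply (proj1 (proj2 Hp)); lra).
    pose proof (phi_lt phi Hp (phi 0) H1). lra.
Qed.

Lemma iter_small (phi : R -> R) : in_Phi phi -> forall t, 0 <= t -> forall eps, 0 < eps ->
  exists N, forall n, (N <= n)%nat -> Nat.iter n phi t < eps.
Proof.
  intros Hp t Ht eps He. destruct (proj2 (proj2 Hp) t Ht eps He) as [N HN].
  exists N. intros n Hn. specialize (HN n Hn). unfold R_dist in HN. rewrite Rminus_0_r in HN.
  pose proof (Rle_abs (Nat.iter n phi t)). lra.
Qed.

Definition Dm {X} (d : X -> X -> R) (p q : X * X) : R :=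
  Rmax (d (fst p) (fst q)) (d (snd p) (snd q)).
Definition FA {X} (A : X -> X -> X) (p : X * X) : X * X :=
  (A (fst p) (snd p), A (snd p) (fst p)).
Definition leP {X} (le : X -> X -> Prop) (p q : X * X) : Prop :=
  le (fst p) (fst q) /\ le (snd q) (snd p).

Lemma iterF_eq X (A : X -> X -> X) : forall n x y,
  Nat.iter n (FA A) (x,y) = (iterA A n x y, iterA A n y x).
Proof. induction n; intros x y; simpl; auto. rewrite IHn. reflexivity. Qed.

Lemma iter_shift X (A : X -> X -> X) : forall n p,
  Nat.iter n (FA A) (FA A p) = FA A (Nat.iter n (FA A) p).
Proof. induction n; intros p; simpl; auto. rewrite IHn. reflexivity. Qed.

Section M.
Context {X : Type}.

Lemma Dm_nonneg (d : X -> X -> R) p q : is_metric d -> 0 <= Dm d p q.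
Proof. intros [H0 _]. unfold Dm. apply Rle_trans with (d (fst p) (fst q)); auto. apply Rmax_l. Qed.

Lemma Dm_sym (d : X -> X -> R) p q : is_metric d -> Dm d p q = Dm d q p.
Proof. intros [_ [_ [Hs _]]]. unfold Dm. rewrite (Hs (fst p)), (Hs (snd p)). auto. Qed.

Lemma Dm_tri (d : X -> X -> R) p q r : is_metric d -> Dm d p r <= Dm d p q + Dm d q r.
Proof.
  intros [_ [_ [_ Ht]]]. unfold Dm.
  pose proof (Rmax_l (d (fst p) (fst q)) (d (snd p) (snd q))).
  pose proof (Rmax_r (d (fst p) (fst q)) (d (snd p) (snd q))).
  pose proof (Rmax_l (d (fst q) (fst r)) (d (snd q) (snd r))).
  pose proof (Rmax_r (d (fst q) (fst r)) (d (snd q) (snd r))).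
  pose proof (Ht (fst p) (fst q) (fst r)). pose proof (Ht (snd p) (snd q) (snd r)).
  apply Rmax_lub; lra.
Qed.

Lemma Dm_refl (d : X -> X -> R) p : is_metric d -> Dm d p p = 0.
Proof.
  intros [_ [Heq _]]. unfold Dm. rewrite (proj2 (Heq _ _) eq_refl), (proj2 (Heq _ _) eq_refl).
  unfold Rmax. destruct (Rle_dec 0 0); auto.
Qed.

Lemma leP_refl le (p : X * X) : partial_order le -> leP le p p.
Proof. intros [Hr _]. split; apply Hr. Qed.

Lemma leP_trans le (p q r : X * X) : partial_order le -> leP le p q -> leP le q r -> leP le p r.
Proof. intros [_ [_ Ht]] [H1 H2] [H3 H4]. split; eauto. Qed.

Lemma FA_contr le d A phi (Hdm : is_metric d)
  (Hcontr : forall x y u v, le x u -> le v y ->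
     d (A x y) (A u v) <= phi (Rmax (d x u) (d y v))) (p q : X * X) :
  leP le p q -> Dm d (FA A p) (FA A q) <= phi (Dm d p q).
Proof.
  destruct p as [x y], q as [u v]; unfold leP, Dm, FA; simpl; intros [H1 H2].
  apply Rmax_lub. apply Hcontr; auto.
  destruct Hdm as [_ [_ [Hs _]]]. rewrite (Hs (A y x) (A v u)).
  rewrite (Rmax_comm (d x u)), (Hs x u), (Hs y v). apply Hcontr; auto.
Qed.

Lemma FA_mono le A (p q : X * X) : partial_order le -> mixed_monotone le A ->
  leP le p q -> leP le (FA A p) (FA A q).
Proof.
  intros [_ [_ Ht]] [M1 M2]. destruct p as [x y], q as [u v]; unfold leP, FA; simpl.
  intros [H1 H2]. split.
  - apply Ht with (A u y); auto.
  - apply Ht with (A y u); auto.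
Qed.

Lemma iter_leP le A (p q : X * X) : partial_order le -> mixed_monotone le A ->
  leP le p q -> forall n, leP le (Nat.iter n (FA A) p) (Nat.iter n (FA A) q).
Proof. intros Hpo Hmm H n; induction n; simpl; auto. apply FA_mono; auto. Qed.

Lemma iter_contr le d A phi (Hpo : partial_order le) (Hmm : mixed_monotone le A)
  (Hdm : is_metric d) (Hphi : in_Phi phi)
  (Hcontr : forall x y u v, le x u -> le v y ->
     d (A x y) (A u v) <= phi (Rmax (d x u) (d y v))) (p q : X * X) :
  leP le p q -> forall n,
  Dm d (Nat.iter n (FA A) p) (Nat.iter n (FA A) q) <= Nat.iter n phi (Dm d p q).
Proof.
  intros H n; induction n; simpl. lra.
  eapply Rle_trans. apply (FA_contr le d A phi Hdm Hcontr). apply iter_leP; auto.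
  apply (proj1 (proj2 Hphi)); auto. apply Dm_nonneg; auto.
Qed.

Lemma lim_unique (d : X -> X -> R) u l1 l2 : is_metric d -> seq_cv d u l1 -> seq_cv d u l2 -> l1 = l2.
Proof.
  intros [H0 [Heq [Hs Ht]]] H1 H2. apply Heq.
  destruct (Rle_lt_or_eq_dec 0 (d l1 l2) (H0 l1 l2)) as [Hp|Hz]; [|lra].
  exfalso. destruct (H1 (d l1 l2 / 2)) as [N1 HN1]; [lra|].
  destruct (H2 (d l1 l2 / 2)) as [N2 HN2]; [lra|].
  specialize (HN1 (N1+N2)%nat ltac:(lia)). specialize (HN2 (N1+N2)%nat ltac:(lia)).
  pose proof (Ht l1 (u (N1+N2)%nat) l2) as H. rewrite (Hs l1 (u (N1+N2)%nat)) in H. lra.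
Qed.

Lemma cv_shift (d : X -> X -> R) u l : seq_cv d u l -> seq_cv d (fun n => u (S n)) l.
Proof. intros H eps He. destruct (H eps He) as [N HN]. exists N. intros n Hn. apply HN; lia. Qed.

Lemma cont_lim d A (a b : nat -> X) la lb : is_metric d -> continuous2 d A ->
  seq_cv d a la -> seq_cv d b lb -> seq_cv d (fun n => A (a n) (b n)) (A la lb).
Proof.
  intros [_ [_ [Hs _]]] Hc Ha Hb eps He.
  destruct (Hc la lb eps He) as [del [Hdel Hd]].
  destruct (Ha del Hdel) as [N1 H1]. destruct (Hb del Hdel) as [N2 H2].
  exists (N1+N2)%nat. intros n Hn. rewrite Hs. apply Hd; rewrite Hs; [apply H1|apply H2]; lia.
Qed.

Lemma mono_lim le d A phi (a b : nat -> X) la lb : is_metric d -> in_Phi phi ->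
  (forall x y u v, le x u -> le v y ->
     d (A x y) (A u v) <= phi (Rmax (d x u) (d y v))) ->
  (forall n, le (a n) la) -> (forall n, le lb (b n)) ->
  seq_cv d a la -> seq_cv d b lb -> seq_cv d (fun n => A (a n) (b n)) (A la lb).
Proof.
  intros Hm Hp Hcontr Hla Hlb Ha Hb eps He.
  destruct (Ha eps He) as [N1 H1]. destruct (Hb eps He) as [N2 H2].
  exists (N1+N2)%nat. intros n Hn.
  eapply Rle_lt_trans. apply Hcontr; auto.
  eapply Rle_lt_trans. apply phi_le; auto.
  apply Rle_trans with (d (a n) la). apply (proj1 Hm). apply Rmax_l.
  apply Rmax_lub_lt; [apply H1|apply H2]; lia.
Qed.

Lemma mono_lim' le d A phi (a b : nat -> X) la lb : is_metric d -> in_Phi phi ->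
  (forall x y u v, le x u -> le v y ->
     d (A x y) (A u v) <= phi (Rmax (d x u) (d y v))) ->
  (forall n, le la (a n)) -> (forall n, le (b n) lb) ->
  seq_cv d a la -> seq_cv d b lb -> seq_cv d (fun n => A (a n) (b n)) (A la lb).
Proof.
  intros Hm Hp Hcontr Hla Hlb Ha Hb eps He.
  destruct (Ha eps He) as [N1 H1]. destruct (Hb eps He) as [N2 H2].
  exists (N1+N2)%nat. intros n Hn.
  pose proof Hm as [_ [_ [Hs _]]].
  rewrite Hs.
  eapply Rle_lt_trans. apply Hcontr; auto.
  eapply Rle_lt_trans. apply phi_le; auto.
  apply Rle_trans with (d la (a n)). apply (proj1 Hm). apply Rmax_l.
  rewrite (Hs la), (Hs lb).
  apply Rmax_lub_lt; [apply H1|apply H2]; lia.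
Qed.

End M.

Theorem theorem2 (X : Type) (le : X -> X -> Prop) (d : X -> X -> R)
  (A : X -> X -> X) (phi : R -> R)
  (Hpo : partial_order le) (Hbi : bi_directed le)
  (Hd : complete_metric d) (Hmm : mixed_monotone le A)
  (Hphi : in_Phi phi)
  (Hcontr : forall x y u v, le x u -> le v y ->
     d (A x y) (A u v) <= phi (Rmax (d x u) (d y v)))
  (Hb : continuous2 d A \/
        ((forall u l, (forall n, le (u n) (u (S n))) -> seq_cv d u l ->
            forall n, le (u n) l) /\
         (forall u l, (forall n, le (u (S n)) (u n)) -> seq_cv d u l ->
            forall n, le l (u n))))
  (Hx0 : exists x0 y0, le x0 (A x0 y0) /\ le (A y0 x0) y0) :
  exists xs : X,
    (A xs xs = xs /\ A xs xs = xs) /\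
    (forall x y, A x y = x /\ A y x = y -> x = xs /\ y = xs) /\
    (forall x, A x x = x -> x = xs) /\
    (forall x y, seq_cv d (fun n => iterA A n x y) xs).
Proof.
  destruct Hd as [Hdm Hcomp].
  pose proof Hdm as [Hd0 [Hdeq [Hds Hdt]]].
  destruct Hx0 as [x0 [y0 [Hx1 Hy1]]].
  set (p := fun n => Nat.iter n (FA A) (x0, y0)).
  assert (Hp0 : leP le (x0, y0) (FA A (x0, y0))) by (split; simpl; auto).
  assert (Hch1 : forall n, leP le (p n) (p (S n))).
  { intro n. unfold p. change (Nat.iter (S n) (FA A) (x0, y0)) with (FA A (Nat.iter n (FA A) (x0, y0))).
    rewrite <- iter_shift. apply iter_leP; auto. }
  assert (Hch : forall n k, leP le (p n) (p (n + k)%nat)).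
  { intros n k; induction k. rewrite Nat.add_0_r. apply leP_refl; auto.
    rewrite Nat.add_succ_r. eapply leP_trans; eauto. }
  set (t0 := Dm d (x0, y0) (FA A (x0, y0))).
  assert (Hstep : forall n, Dm d (p n) (p (S n)) <= Nat.iter n phi t0).
  { intro n. unfold p. change (Nat.iter (S n) (FA A) (x0, y0)) with (FA A (Nat.iter n (FA A) (x0, y0))).
    rewrite <- iter_shift. apply (iter_contr le d A phi Hpo Hmm Hdm Hphi Hcontr); auto. }
  assert (Ht0 : 0 <= t0) by (apply Dm_nonneg; auto).
  assert (Hcl : forall e, 0 < e -> exists N, forall k, Dm d (p N) (p (N + k)%nat) <= e).
  { intros e He. pose proof (phi_lt phi Hphi e He).
    destruct (iter_small phi Hphi t0 Ht0 (e - phi e)) as [N HN]; [lra|].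
    exists N. intro k; induction k.
    - rewrite Nat.add_0_r, Dm_refl; auto. lra.
    - eapply Rle_trans. apply Dm_tri with (q := p (S N)); auto.
      pose proof (Hstep N). pose proof (HN N (le_n N)).
      rewrite Nat.add_succ_r.
      change (p (S N)) with (FA A (p N)).
      change (p (S (N + k))) with (FA A (p (N + k)%nat)).
      assert (Dm d (FA A (p N)) (FA A (p (N + k)%nat)) <= phi e).
      { eapply Rle_trans. apply (FA_contr le d A phi Hdm Hcontr). apply Hch.
        apply (proj1 (proj2 Hphi)); auto. apply Dm_nonneg; auto. }
      change (FA A (p N)) with (p (S N)) in *. lra. }
  assert (Hcau : forall eps, 0 < eps -> exists N, forall m n, (N <= m)%nat -> (N <= n)%nat ->
            Dm d (p m) (p n) < eps).
  { intros eps He. destruct (Hcl (eps/3)) as [N HN]; [lra|]. exists N. intros m n Hm Hn.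
    replace m with (N + (m - N))%nat by lia. replace n with (N + (n - N))%nat by lia.
    eapply Rle_lt_trans. apply Dm_tri with (q := p N); auto.
    rewrite Dm_sym; auto. pose proof (HN (m - N)%nat). pose proof (HN (n - N)%nat). lra. }
  destruct (Hcomp (fun n => fst (p n))) as [xs Hx].
  { intros eps He. destruct (Hcau eps He) as [N HN]. exists N. intros m n Hm Hn.
    eapply Rle_lt_trans; [|apply (HN m n Hm Hn)]. apply Rmax_l. }
  destruct (Hcomp (fun n => snd (p n))) as [ys Hy].
  { intros eps He. destruct (Hcau eps He) as [N HN]. exists N. intros m n Hm Hn.
    eapply Rle_lt_trans; [|apply (HN m n Hm Hn)]. apply Rmax_r. }
  assert (HA1 : A xs ys = xs).
  { apply (lim_unique d (fun n => fst (p (S n)))); auto; [|exact (cv_shift d (fun n => fst (p n)) xs Hx)].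
    change (seq_cv d (fun n => A (fst (p n)) (snd (p n))) (A xs ys)).
    destruct Hb as [Hc | [Hb1 Hb2]].
    - apply cont_lim; auto.
    - apply mono_lim with le phi; auto.
      + apply Hb1; auto. intro n; apply (Hch1 n).
      + apply Hb2; auto. intro n; apply (Hch1 n). }
  assert (HA2 : A ys xs = ys).
  { apply (lim_unique d (fun n => snd (p (S n)))); auto; [|exact (cv_shift d (fun n => snd (p n)) ys Hy)].
    change (seq_cv d (fun n => A (snd (p n)) (fst (p n))) (A ys xs)).
    destruct Hb as [Hc | [Hb1 Hb2]].
    - apply cont_lim; auto.
    - apply mono_lim' with le phi; auto.
      + apply Hb2; auto. intro n; apply (Hch1 n).
      + apply Hb1; auto. intro n; apply (Hch1 n). }
  assert (Hfix : forall n, Nat.iter n (FA A) (xs, ys) = (xs, ys)).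
  { induction n; simpl; auto. rewrite IHn. unfold FA; simpl. rewrite HA1, HA2. auto. }
  assert (Hconv : forall q eps, 0 < eps -> exists N, forall n, (N <= n)%nat ->
            Dm d (Nat.iter n (FA A) q) (xs, ys) < eps).
  { intros [x y] eps He.
    destruct (proj2 (Hbi x xs)) as [w [Hw1 Hw2]].
    destruct (proj1 (Hbi y ys)) as [z [Hz1 Hz2]].
    assert (L1 : leP le (x, y) (w, z)) by (split; simpl; auto).
    assert (L2 : leP le (xs, ys) (w, z)) by (split; simpl; auto).
    destruct (iter_small phi Hphi (Dm d (x, y) (w, z)) ltac:(apply Dm_nonneg; auto) (eps/2))
      as [N1 H1]; [lra|].
    destruct (iter_small phi Hphi (Dm d (xs, ys) (w, z)) ltac:(apply Dm_nonneg; auto) (eps/2))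
      as [N2 H2]; [lra|].
    exists (N1 + N2)%nat. intros n Hn.
    eapply Rle_lt_trans. apply Dm_tri with (q := Nat.iter n (FA A) (w, z)); auto.
    pose proof (iter_contr le d A phi Hpo Hmm Hdm Hphi Hcontr _ _ L1 n).
    pose proof (iter_contr le d A phi Hpo Hmm Hdm Hphi Hcontr _ _ L2 n).
    rewrite Hfix in H0. rewrite (Dm_sym d _ (xs, ys)) by auto.
    pose proof (H1 n ltac:(lia)). pose proof (H2 n ltac:(lia)). lra. }
  assert (Huniq : forall x y, A x y = x /\ A y x = y -> x = xs /\ y = ys).
  { intros x y [E1 E2].
    assert (Hf : forall n, Nat.iter n (FA A) (x, y) = (x, y)).
    { induction n; simpl; auto. rewrite IHn. unfold FA; simpl. rewrite E1, E2. auto. }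
    assert (Hz : Dm d (x, y) (xs, ys) = 0).
    { destruct (Rle_lt_or_eq_dec 0 _ (Dm_nonneg d (x, y) (xs, ys) Hdm)) as [Hpos|]; [|lra].
      exfalso. destruct (Hconv (x, y) _ Hpos) as [N HN]. specialize (HN N (le_n N)).
      rewrite Hf in HN. lra. }
    unfold Dm in Hz; simpl in Hz.
    pose proof (Rmax_l (d x xs) (d y ys)). pose proof (Rmax_r (d x xs) (d y ys)).
    pose proof (Hd0 x xs). pose proof (Hd0 y ys).
    split; apply Hdeq; lra. }
  assert (Hyx : ys = xs) by (apply (Huniq ys xs); auto).
  subst ys.
  exists xs. split; [auto|]. split; [|split].
  - intros x y H. destruct (Huniq x y H); auto.
  - intros x H. destruct (Huniq x x); auto.
  - intros x y eps He. destruct (Hconv (x, y) eps He) as [N HN]. exists N. intros n Hn.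
    specialize (HN n Hn). rewrite iterF_eq in HN. unfold Dm in HN; simpl in HN.
    eapply Rle_lt_trans; [|exact HN]. apply Rmax_l.
Qed.
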